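(* The set $\{V(n)/\varphi(n) : n\ge1\}$ is dense in the interval $(1,+\infty)$; that is, every nonempty open subinterval of $(1,+\infty)$ contains an element of this set.
   Context: For a positive integer $n$, an integer $a$ is called regular modulo $n$ if there exists an integer $x$ with $a^2x\equiv a \pmod n$. Let $V(n)$ denote the number of integers $a$ with $1\le a\le n$ that are regular modulo $n$. (Known fact: $V$ is multiplicative, $V(1)=1$, and $V(p^{\alpha})=p^{\alpha}-p^{\alpha-1}+1$ for a prime $p$ and $\alpha\ge1$.) $\varphi$ is Euler's totient function. *)

(* Defs.v *)
From Stdlib Require Import ClassicalEpsilon.
From mathcomp Require Import all_boot all_order all_algebra.
Set Implicit Arguments. Unset Strict Implicit. Unset Printing Implicit Defensive.
Import GRing.Theory.

Definition regular (n : nat) (a : int) : Prop :=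
  exists x : int, (a ^+ 2 * x = a %[mod n%:Z])%Z.

Definition regularb (n : nat) (a : int) : bool :=
  if excluded_middle_informative (regular n a) then true else false.

Definition V (n : nat) : nat := count (fun a : nat => regularb n a%:Z) (iota 1 n).

(* Main.v *)
Require Import Defs.
From mathcomp Require Import all_boot all_order all_algebra ring zify.
From Stdlib Require Import ClassicalEpsilon.
Set Implicit Arguments. Unset Strict Implicit. Unset Printing Implicit Defensive.

Fixpoint nn (N M : nat) : nat :=
  match M with 0 => 1 | M'.+1 => if (N < M'.+1) && prime M'.+1 then nn N M' * M'.+1 else nn N M' end.

Lemma nn_gt0 N M : 0 < nn N M.
Proof. elim: M => //= M IH; case: ifP => // /andP[_ pr]; by rewrite muln_gt0 IH prime_gt0. Qed.

Lemma nn_cop N M p : prime p -> M < p -> coprime p (nn N M).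
Proof.
move=> pp; elim: M => [|M IH] /= lt; first by rewrite coprimen1.
have IH' := IH (ltnW lt).
case: ifP => // /andP[_ pr]; rewrite coprimeMr IH' /= prime_coprime // dvdn_prime2 //.
by apply/negP => /eqP E; rewrite E ltnn in lt.
Qed.

Lemma nn_dvd N M p : prime p -> N < p <= M -> p %| nn N M.
Proof.
move=> pp; elim: M => [|M IH] /andP[lt1 lt2] /=; first by rewrite leqn0 in lt2; move/eqP: lt2 => E; rewrite E in pp.
case: (ltngtP p M.+1) => [h||E].
- have h2 : p <= M by [].
  case: ifP => _; last by apply: IH; rewrite lt1 h2.
  by apply: dvdn_mulr; apply: IH; rewrite lt1 h2.
- by move=> h; rewrite ltnNge lt2 in h.
- by rewrite -E lt1 pp /= dvdn_mull.
Qed.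

Definition sqf n := forall q, prime q -> ~~ (q * q %| n).

Lemma nn_sqf N M : sqf (nn N M).
Proof.
elim: M => [|M IH] q pq /=.
  by rewrite dvdn1 muln_eq1 andbb; apply/negP => /eqP E; rewrite E in pq.
case: ifP => [/andP[_ pr]|_]; last exact: IH.
have cop : coprime M.+1 (nn N M) by apply: nn_cop.
case: (eqVneq q M.+1) => [E|ne].
  rewrite E; apply/negP; rewrite dvdn_pmul2r //.
  move=> d; move: cop; rewrite prime_coprime // d //.
rewrite Gauss_dvdl ?IH //.
by rewrite coprimeMl prime_coprime // dvdn_prime2 // ne.
Qed.
Import GRing.Theory.

Lemma sqf_cop n a : sqf n -> 0 < n -> coprime a (n %/ gcdn a n).
Proof.
move=> sq n0.
set g := gcdn a n; set m := n %/ g.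
have ng : n = m * g by rewrite divnK // dvdn_gcdr.
have m0 : 0 < m by move: n0; rewrite ng muln_gt0 => /andP[].
apply/negPn/negP => nc.
have d1 : 1 < gcdn a m.
  by rewrite ltn_neqAle eq_sym nc /= gcdn_gt0 m0 orbT.
set p := pdiv (gcdn a m).
have pp : prime p by apply: pdiv_prime.
have pd : p %| gcdn a m by apply: pdiv_dvd.
have pa : p %| a by apply: dvdn_trans pd (dvdn_gcdl _ _).
have pm : p %| m by apply: dvdn_trans pd (dvdn_gcdr _ _).
have pg : p %| g by rewrite dvdn_gcd pa (dvdn_trans pm) // ng dvdn_mulr.
have := sq p pp; rewrite ng dvdn_mul //.
Qed.

Lemma sqf_regular n (a : nat) : sqf n -> 0 < n -> regular n a%:Z.
Proof.
move=> sq n0.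
have cop := sqf_cop a sq n0.
set g := gcdn a n in cop; set m := n %/ g in cop.
have ng : n = g * m by rewrite mulnC divnK // dvdn_gcdr.
have [u [v Huv]] := Bezoutz a%:Z m%:Z.
exists u.
apply/eqP; rewrite eqz_mod_dvd.
have gz : gcdz a%:Z m%:Z = 1%R by rewrite /gcdz /= (eqP cop).
rewrite gz in Huv.
have -> : ((a%:Z) ^+ 2 * u - a%:Z = a%:Z * ((- v) * m%:Z))%R.
  transitivity (Posz a * (u * Posz a - 1))%R; first ring.
  by rewrite -Huv; ring.
rewrite ng PoszM; apply: dvdz_mul.
  exact: dvdn_gcdl.
by apply: dvdz_mull; apply: dvdzz.
Qed.

Lemma V_sqf n : sqf n -> 0 < n -> V n = n.
Proof.
move=> sq n0; rewrite /V -[in RHS](size_iota 1 n) -count_predT.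
apply: eq_count => a; rewrite /regularb.
by case: ClassicalEpsilon.excluded_middle_informative => // H; case: H; apply: sqf_regular.
Qed.

Lemma totient_count P : totient P = count (coprime P) (iota 0 P).
Proof.
rewrite totient_count_coprime -sum1_count /index_iota subn0 [RHS]big_mkcond.
by apply: eq_bigr => i _; case: (coprime P i).
Qed.

Lemma count_cop P c : count (coprime P) (iota 0 (P * c)) = c * totient P.
Proof.
elim: c => [|c IH]; first by rewrite muln0.
rewrite mulnS addnC iotaD count_cat IH add0n -[P * c]addn0 iotaDl count_map mulSn addnC; congr (_ + _).
rewrite totient_count; apply: eq_count => a /=.
by rewrite /coprime mulnC gcdnMDl.
Qed.

Lemma cop_small M a m : coprime (nn 0 M) a -> 0 < m <= M -> coprime m a.
Proof.
move=> cP /andP[m0 mM].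
apply/negPn/negP => nc.
have a0 : 0 < gcdn m a by rewrite gcdn_gt0 m0.
have d1 : 1 < gcdn m a by rewrite ltn_neqAle eq_sym nc.
set p := pdiv (gcdn m a).
have pp : prime p by apply: pdiv_prime.
have pd : p %| gcdn m a by apply: pdiv_dvd.
have pa : p %| a by apply: dvdn_trans pd (dvdn_gcdr _ _).
have pm : p %| m by apply: dvdn_trans pd (dvdn_gcdl _ _).
have pP : p %| nn 0 M.
  apply: nn_dvd => //; rewrite prime_gt0 //=.
  exact: leq_trans (dvdn_leq m0 pm) mM.
have : p %| gcdn (nn 0 M) a by rewrite dvdn_gcd pP pa.
move: cP; rewrite /coprime => /eqP ->; rewrite dvdn1 => /eqP E; by rewrite E in pp.
Qed.

Lemma uniq_flatten_map (T S : eqType) (g : T -> seq S) s :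
  uniq s -> (forall x, x \in s -> uniq (g x)) ->
  (forall x y z, x \in s -> y \in s -> z \in g x -> z \in g y -> x = y) ->
  uniq (flatten (map g s)).
Proof.
elim: s => [|x s IH] //= /andP[xs us] ug dj.
rewrite cat_uniq ug ?mem_head //= IH //; last 2 first.
- by move=> y ys; apply: ug; rewrite inE ys orbT.
- by move=> y1 y2 z h1 h2; apply: dj; rewrite inE ?h1 ?h2 orbT.
rewrite andbT; apply/hasPn => z /flattenP [t /mapP [y ys ->] zy].
apply/negP => zx.
have E : x = y by apply: (dj x y z); rewrite ?inE ?eqxx ?ys ?orbT.
by rewrite E ys in xs.
Qed.

Lemma sumn_mull c (T : Type) (f : T -> nat) s :
  sumn [seq c * f x | x <- s] = c * sumn [seq f x | x <- s].
Proof. by elim: s => [|x s IH] /=; rewrite ?muln0 // IH mulnDr. Qed.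

Lemma counting M : 1 < M ->
  totient (nn 0 M) * sumn [seq M`! %/ m | m <- iota 1 M] <= nn 0 M * M`!.
Proof.
move=> M1.
set P := nn 0 M; set K := M`!.
have P1 : 1 < P.
  have : 2 %| P by apply: nn_dvd.
  by move/dvdn_leq => /(_ (nn_gt0 0 M)).
have K0 : 0 < K by apply: fact_gt0.
have Km m : m \in iota 1 M -> m %| K.
  by rewrite mem_iota => /andP[m0 mM]; apply: dvdn_fact; rewrite m0 -ltnS add1n in mM *.
set g := fun m => [seq m * a | a <- filter (coprime P) (iota 0 (P * (K %/ m)))].
have gE m z : z \in g m -> exists2 a, coprime P a & (z = m * a) /\ (a < P * (K %/ m)).
  move=> /mapP [a]; rewrite mem_filter mem_iota add0n => /andP [ca /andP [_ la]] ->.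
  by exists a.
set L := flatten (map g (iota 1 M)).
have uL : uniq L.
  apply: uniq_flatten_map; first exact: iota_uniq.
    move=> m; rewrite mem_iota => /andP[m0 _].
    rewrite map_inj_uniq ?filter_uniq ?iota_uniq //.
    by move=> a b /eqP; rewrite eqn_pmul2l // => /eqP.
  move=> x y z xs ys /gE [a ca [-> _]] /gE [b cb [E _]].
  move: xs ys; rewrite !mem_iota !add1n !ltnS => /andP [x0 xM] /andP [y0 yM].
  have cxb : coprime x b by apply: (@cop_small M) => //; rewrite x0.
  have cya : coprime y a by apply: (@cop_small M) => //; rewrite y0.
  have h1 : x %| y by rewrite -(Gauss_dvdl _ cxb) -E dvdn_mulr.
  have h2 : y %| x by rewrite -(Gauss_dvdl _ cya) E dvdn_mulr.
  by apply/eqP; rewrite eqn_dvd h1 h2.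
have sL : {subset L <= iota 0 (P * K)}.
  move=> z /flattenP [t /mapP [m ms ->]] /gE [a _ [-> la]].
  have m0 : 0 < m by move: ms; rewrite mem_iota => /andP[].
  rewrite mem_iota add0n /= -(divnK (Km m ms)).
  by rewrite mulnA [_ * m]mulnC ltn_pmul2l.
have := uniq_leq_size uL sL; rewrite size_iota.
rewrite /L size_flatten /shape -map_comp.
have -> : [seq (size \o g) i | i <- iota 1 M] = [seq totient P * (K %/ m) | m <- iota 1 M].
  apply: eq_map => m /=; rewrite size_map size_filter count_cop mulnC //.
by rewrite sumn_mull.
Qed.

From mathcomp Require Import all_boot.
From Stdlib Require Import Reals Lra Lia.
Open Scope R_scope.

Definition ratio (N M : nat) : R := INR (nn N M) / INR (totient (nn N M)).

Fixpoint H (M : nat) : R := match M with 0%nat => 0 | S M' => H M' + / INR (S M') end.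

Lemma INRM (a b : nat) : INR (muln a b) = INR a * INR b.
Proof. exact: mult_INR. Qed.

Lemma tot_pos (n : nat) : (0 < n)%nat -> 0 < INR (totient n).
Proof. move=> h; apply: lt_0_INR; apply/ltP; by rewrite totient_gt0. Qed.

Lemma nn_pos (N M : nat) : 0 < INR (nn N M).
Proof. apply: lt_0_INR; apply/ltP; exact: nn_gt0. Qed.

Lemma ratio_pos (N M : nat) : 0 < ratio N M.
Proof.
rewrite /ratio; apply: Rdiv_lt_0_compat; [exact: nn_pos | apply: tot_pos; exact: nn_gt0].
Qed.

Definition fac (N M : nat) : R := if (N < M.+1)%nat && prime M.+1 then INR M.+1 / INR M else 1.

Lemma ratioS (N M : nat) : ratio N M.+1 = ratio N M * fac N M.
Proof.
rewrite /ratio /fac [nn N M.+1]/=; case: ifP => [/andP[_ pr]|_]; last lra.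
have cop : coprime (nn N M) M.+1 by rewrite coprime_sym; apply: nn_cop.
rewrite totient_coprime // (totient_prime pr) !INRM.
change (M.+1.-1) with M.
have h1 := nn_pos N M.
have h2 := @tot_pos _ (nn_gt0 N M).
have h3 : 0 < INR M.
  apply: lt_0_INR; apply/ltP; move: (prime_gt1 pr); by rewrite ltnS.
field; lra.
Qed.

Lemma fac_ge1 (N M : nat) : 1 <= fac N M.
Proof.
rewrite /fac; case: ifP => [/andP[_ pr]|_]; last lra.
have h3 : 0 < INR M.
  apply: lt_0_INR; apply/ltP; move: (prime_gt1 pr); by rewrite ltnS.
rewrite S_INR; apply: (Rmult_le_reg_r (INR M)) => //; field_simplify; lra.
Qed.

Lemma fac_le (N M : nat) : (0 < N)%nat -> (N <= M)%nat -> fac N M <= INR N.+1 / INR N.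
Proof.
move=> N0 NM; rewrite /fac; case: ifP => _.
  have h3 : 0 < INR N by apply: lt_0_INR; apply/ltP.
  have h4 : INR N <= INR M by apply: le_INR; apply/leP.
  rewrite !S_INR; apply: (Rmult_le_reg_r (INR N * INR M)); first nra.
  field_simplify; lra.
have h3 : 0 < INR N by apply: lt_0_INR; apply/ltP.
rewrite S_INR; apply: (Rmult_le_reg_r (INR N)) => //; field_simplify; lra.
Qed.

Lemma ratio_small (N M : nat) : (M <= N)%nat -> ratio N M = 1.
Proof.
elim: M => [|M IH] h; first by rewrite /ratio /= /totient /=; lra.
rewrite ratioS IH ?(ltnW h) // /fac ltnNge h /=; lra.
Qed.

Lemma ratio_split (N k : nat) : ratio 0 (N + k) = ratio 0 N * ratio N (N + k).
Proof.
elim: k => [|k IH]; first by rewrite addn0 (@ratio_small N N (leqnn N)); lra.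
rewrite addnS !ratioS IH /fac !ltnS leq_addr leq0n /=; ring.
Qed.

Lemma INRD (a b : nat) : INR (addn a b) = INR a + INR b.
Proof. exact: plus_INR. Qed.

Lemma sum_H (K M : nat) : (forall m, (0 < m <= M)%nat -> (m %| K)%nat) ->
  INR (sumn [seq K %/ m | m <- iota 1 M]) = INR K * H M.
Proof.
elim: M => [|M IH] hd; first by rewrite /= Rmult_0_r.
have -> : iota 1 M.+1 = iota 1 M ++ [:: M.+1] by rewrite -[M.+1]addn1 iotaD add1n addn1.
rewrite map_cat sumn_cat INRD IH; last first.
  by move=> m /andP[m0 mM]; apply: hd; rewrite m0 (leq_trans mM).
rewrite [sumn [:: _]]/= addn0.
change (H M.+1) with (H M + / INR M.+1).
have dK : (M.+1 %| K)%nat by apply: hd; rewrite ltnSn.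
have e : INR K = INR (K %/ M.+1) * INR M.+1 by rewrite -INRM divnK.
have hM : 0 < INR M.+1 by apply: lt_0_INR; apply/ltP.
rewrite e; field; lra.
Qed.

Lemma H_ge_ratio (M : nat) : (1 < M)%nat -> H M <= ratio 0 M.
Proof.
move=> M1.
have c := counting M1.
have c' : INR (totient (nn 0 M)) * INR (sumn [seq M`! %/ m | m <- iota 1 M]) <= INR (nn 0 M) * INR M`!.
  by rewrite -!INRM; apply: le_INR; apply/leP.
rewrite sum_H in c'; last by move=> m /andP[m0 mM]; apply: dvdn_fact; rewrite m0.
have hK : 0 < INR M`! by apply: lt_0_INR; apply/ltP; exact: fact_gt0.
have ht := @tot_pos _ (nn_gt0 0 M).
rewrite /ratio; apply: (Rmult_le_reg_r (INR (totient (nn 0 M)) * INR M`!)); first nra.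
replace (INR (nn 0 M) / INR (totient (nn 0 M)) * (INR (totient (nn 0 M)) * INR M`!))
  with (INR (nn 0 M) * INR M`!) by (field; lra).
nra.
Qed.

Lemma H_grow (M j : nat) : (0 < M)%nat -> H M + INR j / INR (M + j) <= H (M + j).
Proof.
move=> M0; elim: j => [|j IH]; first by rewrite addn0 /Rdiv Rmult_0_l; lra.
rewrite addnS.
change (H (M + j).+1) with (H (M + j) + / INR (M + j).+1).
have ha : 0 < INR (M + j) by apply: lt_0_INR; apply/ltP; rewrite addn_gt0 M0.
have e : INR (M + j).+1 = INR (M + j) + 1 by rewrite S_INR.
rewrite e S_INR.
have hj : 0 <= INR j by apply: pos_INR.
have : INR j / (INR (M + j) + 1) <= INR j / INR (M + j).
  apply: Rmult_le_compat_l => //; apply: Rinv_le_contravar; lra.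
have : (INR j + 1) / (INR (M + j) + 1) = INR j / (INR (M + j) + 1) + / (INR (M + j) + 1) by field; lra.
lra.
Qed.

Lemma H_pow (k : nat) : INR k / 2 <= H (expn 2 k).
Proof.
elim: k => [|k IH]; first by rewrite /= /Rdiv Rmult_0_l; lra.
rewrite expnS mul2n -addnn.
have h := @H_grow (expn 2 k) (expn 2 k) (expn_gt0 2 k).
have hp : 0 < INR (expn 2 k) by apply: lt_0_INR; apply/ltP; exact: expn_gt0.
have : INR (expn 2 k) / INR (expn 2 k + expn 2 k) = / 2 by rewrite INRD; field; lra.
rewrite S_INR; lra.
Qed.

Lemma nat_big (B : R) : exists n : nat, B < INR n.
Proof.
have h : 0 < / (Rabs B + 1) by apply: Rinv_0_lt_compat; have := Rabs_pos B; lra.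
have [N [h1 h2]] := archimed_cor1 _ h.
exists N.
have hN : 0 < INR N by apply: lt_0_INR.
have : Rabs B + 1 < INR N.
  have ha : 0 < Rabs B + 1 by have := Rabs_pos B; lra.
  have hp : 0 < (Rabs B + 1) * INR N by apply: Rmult_lt_0_compat.
  have := Rmult_lt_compat_l _ _ _ hp h1.
  replace ((Rabs B + 1) * INR N * / INR N) with (Rabs B + 1) by (field; lra).
  replace ((Rabs B + 1) * INR N * / (Rabs B + 1)) with (INR N) by (field; lra).
  done.
have := Rle_abs B; lra.
Qed.

Theorem proposition4 (x y : R) :
  1 <= x -> x < y ->
  exists n : nat, (0 < n)%nat /\ x < INR (V n) / INR (totient n) < y.
Proof.
move=> hx hxy.
have hr : 0 < y / x - 1.
  have : 1 < y / x by apply: (Rmult_lt_reg_r x); [lra | field_simplify; lra].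
  lra.
have [N [hN N0]] := archimed_cor1 _ hr.
have N0' : (0 < N)%nat by apply/ltP.
have hNp : 0 < INR N by apply: lt_0_INR.
have step : INR N.+1 / INR N < y / x.
  rewrite S_INR; replace ((INR N + 1) / INR N) with (1 + / INR N) by (field; lra); lra.
have step' : x * (INR N.+1 / INR N) < y.
  have := Rmult_lt_compat_l x _ _ ltac:(lra) step.
  replace (x * (y / x)) with y by (field; lra). done.
have greedy : forall k, ratio N (N + k) <= x \/ exists M, x < ratio N M < y.
  elim=> [|k IH].
    left; rewrite (@ratio_small N (N + 0)) ?addn0 //; lra.
  case: IH => [IH|]; last by right.
  case: (Rle_dec (ratio N (N + k).+1) x) => h; first by left; rewrite -addnS in h.
  right; exists (N + k).+1; split; first lra.
  rewrite ratioS.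
  have f1 := fac_ge1 N (N + k).
  have f2 := @fac_le N (N + k) N0' (leq_addr k N).
  have rp := ratio_pos N (N + k).
  have : ratio N (N + k) * fac N (N + k) <= x * fac N (N + k).
    by apply: Rmult_le_compat_r; lra.
  have : x * fac N (N + k) <= x * (INR N.+1 / INR N).
    by apply: Rmult_le_compat_l; lra.
  lra.
have r0p := ratio_pos 0 N.
have [n hn] := nat_big (2 * (x * ratio 0 N)).
set e := addn (addn n N) 2.
set M := expn 2 e.
have NM : (N <= M)%nat.
  have := ltn_expl e (isT : (1 < 2)%nat); rewrite /M /e; lia.
have M1 : (1 < M)%nat.
  have := ltn_expl e (isT : (1 < 2)%nat); rewrite /M /e; lia.
have hH := H_pow e.
have hR := @H_ge_ratio M M1.
have en : INR n <= INR e by apply: le_INR; apply/leP; rewrite /e; lia.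
have sp := ratio_split N (M - N).
rewrite subnKC // in sp.
have big : x < ratio N M.
  have : x * ratio 0 N < ratio 0 N * ratio N M by rewrite /M in sp hR *; lra.
  move=> h; apply: (Rmult_lt_reg_l (ratio 0 N)) => //; lra.
have [h|[M' hM']] := greedy (subn M N).
  rewrite subnKC // in h; lra.
exists (nn N M'); split; first exact: nn_gt0.
have hV : V (nn N M') = nn N M' by apply: V_sqf; [exact: nn_sqf | exact: nn_gt0].
rewrite hV; exact: hM'.
Qed.
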